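(* Let $(V,c)$ be a network satisfying the Yang-type inequality with constant $C_{YT}$. Let $\Omega\subset V$ be finite with Dirichlet eigenvalues $\lambda_1\le\cdots\le\lambda_{|\Omega|}$, and let $1\le k<|\Omega|$. If $\lambda_k\le1-\delta$ for some $\delta>0$, then $$\lambda_{k+1}-\lambda_{\min}\le(1+\theta)\,k^{\theta/2}(\lambda_1-\lambda_{\min}),\qquad\text{where }\theta=\frac{C_{YT}}{\delta}.$$
   Context: A network is a pair $(V,c)$ with $V$ countable and $c:V\times V\to[0,\infty)$ symmetric with $\pi(x)=\sum_yc(x,y)<\infty$; $P(x,y)=c(x,y)/\pi(x)$ and $\Delta f(x)=\sum_yP(x,y)(f(x)-f(y))$, a bounded self-adjoint operator on $L^2(V,\pi)$ (inner product $\sum_x\pi(x)f(x)\overline{g(x)}$) with spectrum in $[0,2]$; $\lambda_{\min}$ is the bottom of its spectrum. For finite $\Omega\subset V$, the Dirichlet eigenvalues $\lambda_1\le\cdots\le\lambda_{|\Omega|}$ of $\Omega$ are the eigenvalues (with multiplicity) of the compression $\Delta_\Omega f=\mathbf 1_\Omega\cdot\Delta f$ on functions vanishing outside $\Omega$. The network satisfies the Yang-type inequality with constant $C_{YT}$ if for every finite $\Omega\subset V$ and every $k<|\Omega|$: $\sum_{i=1}^k(\lambda_{k+1}-\lambda_i)^2(1-\lambda_i)\le C_{YT}\sum_{i=1}^k(\lambda_{k+1}-\lambda_i)(\lambda_i-\lambda_{\min})$. *)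

(* Defs.v *)
From HB Require Import structures.
From mathcomp Require Import all_boot all_order all_algebra.
From mathcomp Require Import all_classical all_reals all_analysis.
Set Implicit Arguments. Unset Strict Implicit. Unset Printing Implicit Defensive.
Import Order.TTheory GRing.Theory Num.Theory.
Local Open Scope classical_set_scope.
Local Open Scope ring_scope.

Section Network.
Variables (R : realType) (V : countType).
Implicit Types (c : V -> V -> R).

Definition pi_w c (x : V) : R := fine (\esum_(y in [set: V]) (c x y)%:E).

(* (V,c) is a network: c >= 0, symmetric, pi(x) finite (and positive so that
   P = c/pi is defined). *)
Definition is_network c : Prop :=
  [/\ (forall x y, 0 <= c x y),
      (forall x y, c x y = c y x),
      (forall x, (\esum_(y in [set: V]) (c x y)%:E < +oo)%E) &
      (forall x, 0 < pi_w c x)].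

Definition transP c (x y : V) : R := c x y / pi_w c x.

(* Matrix of the compression Delta_Omega on functions vanishing outside Omega
   (Omega given as a duplicate-free list): (Delta_Omega f)(x) = f x - sum_{y in Omega} P(x,y) f y. *)
Definition dir_mx c (Om : seq V) : 'M[R]_(size Om) :=
  \matrix_(i, j) ((i == j)%:R - transP c (tnth (in_tuple Om) i) (tnth (in_tuple Om) j)).

Definition dirichlet_eigs c (Om : seq V) (lam : seq R) : Prop :=
  sorted <=%R lam /\ char_poly (dir_mx c Om) = \prod_(l <- lam) ('X - l%:P).

(* Rayleigh quotient <Delta f, f>_pi / <f, f>_pi of the finitely supported
   function equal to f on S (S duplicate-free) and 0 outside S. *)
Definition rq_num c (S : seq V) (f : V -> R) : R :=
  \sum_(x <- S) pi_w c x * f x * (f x - \sum_(y <- S) transP c x y * f y).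
Definition rq_den c (S : seq V) (f : V -> R) : R :=
  \sum_(x <- S) pi_w c x * f x ^+ 2.

(* bottom of the spectrum of Delta on L^2(V,pi), via the variational principle
   over the dense subspace of finitely supported functions *)
Definition lambda_min c : R :=
  inf [set r | exists (S : seq V) (f : V -> R),
         [/\ uniq S, 0 < rq_den c S f & r = rq_num c S f / rq_den c S f]].

Definition yang_type c (C : R) : Prop :=
  forall (Om : seq V) (lam : seq R), uniq Om -> dirichlet_eigs c Om lam ->
  forall k : nat, (k < size Om)%N ->
    \sum_(i < k) (lam`_k - lam`_i) ^+ 2 * (1 - lam`_i)
      <= C * \sum_(i < k) (lam`_k - lam`_i) * (lam`_i - lambda_min c).

End Network.

(* Main.v *)
Require Import Defs.
From HB Require Import structures.
From mathcomp Require Import all_boot all_order all_algebra.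
From mathcomp Require Import all_classical all_reals all_analysis.
From mathcomp Require Import ring lra.
Import Order.TTheory GRing.Theory Num.Theory.
Local Open Scope ring_scope.

Section CYall.
Local Open Scope classical_set_scope.
Local Open Scope ring_scope.


Lemma cs_sum (R : realType) n (a : 'I_n -> R) :
  (\sum_i a i) ^+ 2 <= n%:R * \sum_i a i ^+ 2.
Proof.
set S := \sum_i a i; set Q := \sum_i a i ^+ 2.
have h : 0 <= \sum_i \sum_j (a i - a j) ^+ 2.
  by apply: sumr_ge0 => i _; apply: sumr_ge0 => j _; exact: sqr_ge0.
have e1 i : \sum_j (a i - a j) ^+ 2 = a i ^+ 2 *+ n - 2 * a i * S + Q.
  have -> : \sum_j (a i - a j) ^+ 2 = \sum_j (a i ^+ 2 + (- (2 * a i) * a j + a j ^+ 2)).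
    by apply: eq_bigr => j _; ring.
  rewrite big_split /= big_split /= sumr_const card_ord -mulr_sumr /S /Q.
  ring.
have e : \sum_i \sum_j (a i - a j) ^+ 2 = Q *+ n - 2 * S * S + Q *+ n.
  rewrite (eq_bigr _ (fun i _ => e1 i)) big_split /= sumrB sumr_const card_ord.
  rewrite -mulr_suml -mulr_sumr -sumrMnl /S /Q; ring.
rewrite mulr_natl.
move: h; rewrite e; set X := Q *+ n; rewrite expr2; set Y := S * S.
have -> : 2 * S * S = 2 * Y by rewrite /Y mulrA.
lra.
Qed.

Section CY.
Variable R : realType.
Variables (mu : nat -> R) (th : R).

Definition Qf m (z : R) := \sum_(i < m) (z - mu i) ^+ 2.
Definition Lf m (z : R) := \sum_(i < m) (z - mu i).
Definition Gf m (z : R) := \sum_(i < m) ((z - mu i) ^+ 2 - th * ((z - mu i) * mu i)).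

Lemma is_derive_Q m (z : R) : is_derive z 1 (Qf m) (2 * Lf m z).
Proof.
have -> : Qf m = \sum_(i < m) (fun z => (z - mu i) ^+ 2).
  by rewrite fct_sumE; apply/funext => x.
rewrite /Lf mulr_sumr.
apply: is_derive_sum => i.
apply: is_derive_eq.
rewrite subr0; rewrite /GRing.scale/=; ring.
Qed.

Lemma GfE m z : Gf m z = (1 + th) * Qf m z - th * z * Lf m z.
Proof.
rewrite /Gf /Qf /Lf !mulr_sumr -sumrB; apply: eq_bigr => i _; ring.
Qed.

Lemma Gf_convex m a b z :
  (b - a) * Gf m z - (b - z) * Gf m a - (z - a) * Gf m b
  = m%:R * ((b - a) * (z - a) * (z - b)).
Proof.
rewrite /Gf !mulr_sumr -!sumrB.
rewrite mulr_natl -[in RHS](card_ord m) -sumr_const.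
apply: eq_bigr => i _; ring.
Qed.

Lemma Gf_rec m z :
  Gf m.+1 z = Gf m z + ((z - mu m) ^+ 2 - th * ((z - mu m) * mu m)).
Proof. by rewrite /Gf big_ord_recr. Qed.


Variable k : nat.
Hypothesis mono : forall i j, (i <= j <= k)%N -> mu i <= mu j.
Hypothesis H : forall m, (1 <= m <= k)%N -> Gf m (mu m) <= 0.

Lemma Gf_nonpos m z : (1 <= m <= k)%N -> mu m.-1 <= z <= mu m -> Gf m z <= 0.
Proof.
case: m => [//|n] /andP[_ nk] /andP[az zb] /=.
have Ga : Gf n.+1 (mu n) <= 0.
  rewrite Gf_rec subrr expr0n /= mul0r mulr0 subr0 addr0.
  case: n nk az {zb} => [|n] nk _; first by rewrite /Gf big_ord0.
  by apply: H; rewrite /= ltnW.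
have Gb : Gf n.+1 (mu n.+1) <= 0 by apply: H.
have [ab|ab] := boolP (mu n < mu n.+1).
  have E := Gf_convex n.+1 (mu n) (mu n.+1) z.
  have h1 : (mu n.+1 - z) * Gf n.+1 (mu n) <= 0 by apply: mulr_ge0_le0; rewrite ?subr_ge0.
  have h2 : (z - mu n) * Gf n.+1 (mu n.+1) <= 0 by apply: mulr_ge0_le0; rewrite ?subr_ge0.
  have h3 : n.+1%:R * ((mu n.+1 - mu n) * (z - mu n) * (z - mu n.+1)) <= 0.
    apply: mulr_ge0_le0; first exact: ler0n.
    apply: mulr_ge0_le0; last by rewrite subr_le0.
    by apply: mulr_ge0; rewrite subr_ge0 // ltW.
  have : (mu n.+1 - mu n) * Gf n.+1 z <= 0.
    have -> : (mu n.+1 - mu n) * Gf n.+1 z = (mu n.+1 - z) * Gf n.+1 (mu n)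
      + (z - mu n) * Gf n.+1 (mu n.+1)
      + n.+1%:R * ((mu n.+1 - mu n) * (z - mu n) * (z - mu n.+1)) by rewrite -E; ring.
    by apply: (le_trans (lerD (lerD h1 h2) h3)); rewrite !addr0.
  by rewrite pmulr_rle0 // subr_gt0.
move: ab; rewrite -leNgt => ba.
have -> : z = mu n by apply/le_anti; rewrite az (le_trans zb ba).
exact: Ga.
Qed.

Lemma Q_pos m z : (1 <= m)%N -> mu 0 < z -> 0 < Qf m z.
Proof.
case: m => [//|n] _ z0; rewrite /Qf big_ord_recl.
have h1 : 0 < (z - mu 0) ^+ 2 by rewrite exprn_gt0 // subr_gt0.
have h2 : 0 <= \sum_(i < n) (z - mu (bump 0 i)) ^+ 2.
  by apply: sumr_ge0 => i _; rewrite sqr_ge0.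
rewrite /=; lra.
Qed.

Variable p : R.
Definition phi m z := ln (Qf m z) - p * ln z.
Definition dphi m z := 2 * Lf m z / Qf m z - p / z.

Lemma phi_derive m z : 0 < z -> 0 < Qf m z -> is_derive z 1 (phi m) (dphi m z).
Proof.
move=> zp qp.
have h1 : is_derive z 1 (@ln R \o Qf m) ((Qf m z)^-1 * (2 * Lf m z)).
  exact: is_derive1_comp (is_derive1_ln qp) (is_derive_Q m z).
have h2 := is_deriveZ p (is_derive1_ln zp).
have h3 := is_deriveB h1 h2.
have -> : phi m = (@ln R \o Qf m) - p \*: @ln R by apply/funext => t /=; rewrite /phi.
apply: (is_derive_eq h3).
rewrite /dphi /GRing.scale/=.
by rewrite mulrC.
Qed.


Hypothesis th0 : 0 < th.
Hypothesis p_def : p = 2 + 2 / th.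
Hypothesis mu0 : 0 < mu 0.

Lemma dphi_ge0 m z : 0 < z -> 0 < Qf m z -> Gf m z <= 0 -> 0 <= dphi m z.
Proof.
move=> zp qp; rewrite GfE => G.
have -> : dphi m z = (th * z * Lf m z - (1 + th) * Qf m z) * 2 / (th * z * Qf m z).
  rewrite /dphi p_def; field.
  by rewrite !gt_eqF.
apply: divr_ge0; last by rewrite !mulr_ge0 // ltW.
by apply: mulr_ge0 => //; lra.
Qed.

Lemma phi_piece m x y : (1 <= m <= k)%N -> mu m.-1 <= x -> x <= y -> y <= mu m ->
  mu 0 < x -> phi m x <= phi m y.
Proof.
move=> mk ax xy yb x0.
have m1 : (1 <= m)%N by case/andP: mk.
have D t : x <= t -> is_derive t 1 (phi m) (dphi m t).
  move=> xt; apply: phi_derive; first exact: lt_trans mu0 (lt_le_trans x0 xt).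
  exact: Q_pos (lt_le_trans x0 xt).
have D' : forall t, t \in `]x, y[ -> is_derive t 1 (phi m) (dphi m t).
  by move=> t; rewrite in_itv /= => /andP[xt _]; apply: D; exact: ltW.
have dcont : {in `[x, y], forall t, derivable (phi m) t 1}.
  move=> t; rewrite in_itv /= => /andP[xt _].
  by have [] := D t xt.
have [c] := MVT_segment xy D' (derivable_within_continuous dcont).
rewrite in_itv /= => /andP[xc cy] E.
rewrite -subr_ge0 E; apply: mulr_ge0; last by rewrite subr_ge0.
apply: dphi_ge0.
- exact: lt_trans mu0 (lt_le_trans x0 xc).
- exact: Q_pos (lt_le_trans x0 xc).
- by apply: Gf_nonpos => //; rewrite (le_trans ax xc) (le_trans cy yb).
Qed.

Definition Rp z := \sum_(i < k) (if mu i <= z then (z - mu i) ^+ 2 else 0).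

Lemma Rp_piece m z : (1 <= m <= k)%N -> mu m.-1 <= z <= mu m -> Rp z = Qf m z.
Proof.
move=> /andP[m1 mk] /andP[az zb].
rewrite /Rp /Qf (big_ord_widen k (fun i => (z - mu i) ^+ 2) mk).
rewrite (bigID (fun i : 'I_k => (i < m)%N)) /=.
rewrite [X in _ + X]big1 ?addr0; last first.
  move=> i; rewrite -leqNgt => mi.
  case: ifP => // iz; apply/eqP; rewrite sqrf_eq0 subr_eq0; apply/eqP/le_anti.
  rewrite iz (le_trans zb) // mono // mi /=; exact: ltnW (ltn_ord i).
apply: eq_big => [i //|i im].
rewrite ifT // (le_trans _ az) // mono //.
by rewrite -ltnS prednK // im /= (leq_trans (leq_pred m) mk).
Qed.

Definition Psi z := ln (Rp z) - p * ln z.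

Lemma Psi_chain m x y : (m <= k)%N -> (1 + th) * mu 0 <= x -> x <= y -> y <= mu m ->
  Psi x <= Psi y.
Proof.
have z0 : mu 0 < (1 + th) * mu 0 by rewrite mulrDl mul1r ltrDl mulr_gt0.
elim: m x y => [|m IH] x y mk zx xy ym.
  by have := lt_le_trans z0 (le_trans zx (le_trans xy ym)); rewrite ltxx.
have mk' : (m <= k)%N by rewrite ltnW.
have piece u v : mu m <= u -> u <= v -> v <= mu m.+1 -> (1 + th) * mu 0 <= u ->
    Psi u <= Psi v.
  move=> mu_u uv vm zu.
  rewrite /Psi !(@Rp_piece m.+1) //; last by rewrite mu_u (le_trans uv vm).
    by apply: phi_piece => //; exact: lt_le_trans z0 zu.
  by rewrite (le_trans mu_u uv) vm.
have [ym'|ym'] := leP y (mu m); first exact: IH.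
have [xm|xm] := leP (mu m) x; first exact: piece.
apply: (le_trans (IH x (mu m) mk' zx (ltW xm) (lexx _))).
by apply: piece => //; [exact: ltW|exact: le_trans zx (ltW xm)].
Qed.


Lemma cy_main : (1 <= k)%N -> mu k <= (1 + th) * (k%:R `^ (th / 2)) * mu 0.
Proof.
move=> k1.
have kge1 : 1 <= (k%:R : R) by rewrite ler1n.
have P1 : 1 <= (k%:R : R) `^ (th / 2).
  have h0 : 0 <= th / 2 by rewrite divr_ge0 // ltW.
  by have := ler_powR kge1 h0; rewrite powRr0.
have z0 : mu 0 < (1 + th) * mu 0 by rewrite mulrDl mul1r ltrDl mulr_gt0.
have [le|lt] := leP (mu k) ((1 + th) * mu 0).
  apply: (le_trans le).
  have h : 0 <= (1 + th) * mu 0 * ((k%:R : R) `^ (th / 2) - 1).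
    by apply: mulr_ge0; [exact: ltW (lt_trans mu0 z0) | rewrite subr_ge0].
  have -> : (1 + th) * k%:R `^ (th / 2) * mu 0 =
    (1 + th) * mu 0 + (1 + th) * mu 0 * ((k%:R : R) `^ (th / 2) - 1) by ring.
  by rewrite lerDl.
set P := (k%:R : R) `^ (th / 2).
set z := (1 + th) * mu 0.
set M := mu k.
have Mpos : 0 < M by rewrite (lt_trans mu0 (lt_trans z0 lt)).
have zpos : 0 < z by rewrite (lt_trans mu0 z0).
have ch := @Psi_chain k z M (leqnn k) (lexx z) (ltW lt) (lexx M) : Psi z <= Psi M.
rewrite /Psi in ch.
have R0 : (th * mu 0) ^+ 2 <= Rp z.
  rewrite /Rp; case: k k1 {lt ch P P1 kge1} mono H => [//|n] _ _ _.
  rewrite big_ord_recl /= ifT; last exact: ltW.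
  have -> : z - mu 0 = th * mu 0 by rewrite /z; ring.
  rewrite lerDl; apply: sumr_ge0 => i _; case: ifP => // _; exact: sqr_ge0.
have RM : Rp M = Qf k M.
  apply: Rp_piece; first by rewrite k1 leqnn.
  by rewrite lexx mono // leq_pred leqnn.
have Qp : 0 < Qf k M by apply: Q_pos => //; rewrite (lt_trans z0 lt).
have G' : (1 + th) * Qf k M <= th * M * Lf k M.
  by have := @H k; rewrite k1 leqnn GfE subr_le0 => /(_ isT).
have CS : Lf k M ^+ 2 <= k%:R * Qf k M by exact: cs_sum.
have Qb : (1 + th) ^+ 2 * Qf k M <= (th * M) ^+ 2 * k%:R.
  have h1 : 0 <= (1 + th) * Qf k M by rewrite mulr_ge0 // ltW // addr_gt0.
  have h2 : ((1 + th) * Qf k M) ^+ 2 <= (th * M * Lf k M) ^+ 2.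
    by rewrite ler_pXn2r // ?nnegrE // (le_trans h1 G').
  have h3 : (th * M * Lf k M) ^+ 2 <= (th * M) ^+ 2 * (k%:R * Qf k M).
    by rewrite exprMn ler_wpM2l // sqr_ge0.
  have h4 := le_trans h2 h3.
  rewrite -(@ler_pM2r _ (Qf k M)) //.
  have e1 : (1 + th) ^+ 2 * Qf k M * Qf k M = ((1 + th) * Qf k M) ^+ 2 by ring.
  have e2 : (th * M) ^+ 2 * k%:R * Qf k M = (th * M) ^+ 2 * (k%:R * Qf k M) by ring.
  by rewrite e1 e2.
have th1 : 0 < 1 + th by rewrite addr_gt0.
have Rzp : 0 < Rp z by apply: lt_le_trans R0; rewrite exprn_gt0 // mulr_gt0.
have l1 : ln th *+ 2 + ln (mu 0) *+ 2 <= ln (Rp z).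
  move: R0; rewrite -ler_ln ?posrE //; last by rewrite exprn_gt0 // mulr_gt0.
  by rewrite lnXn ?mulr_gt0 // lnM ?posrE // mulrnDl.
have l2 : ln (1 + th) *+ 2 + ln (Qf k M) <= ln th *+ 2 + ln M *+ 2 + ln (k%:R).
  move: Qb; rewrite -ler_ln ?posrE //; last 2 first.
  - by rewrite mulr_gt0 // exprn_gt0.
  - by rewrite mulr_gt0 // ?exprn_gt0 ?mulr_gt0 // (lt_le_trans ltr01 kge1).
  rewrite lnM ?posrE ?exprn_gt0 // lnM ?posrE ?exprn_gt0 ?mulr_gt0 //; last first.
    exact: (lt_le_trans ltr01 kge1).
  by rewrite !lnXn // ?mulr_gt0 // lnM ?posrE // mulrnDl.
have lz : ln z = ln (1 + th) + ln (mu 0) by rewrite /z lnM ?posrE.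
rewrite lz RM p_def in ch.
set a := ln M in l2 ch *; set b := ln (mu 0) in l1 lz ch *.
set t := ln (1 + th) in l2 lz ch *; set l := ln (k%:R) in l2 *.
set w := 2 / th in ch *.
have key : w * (a - t - b) <= l.
  have -> : w * (a - t - b) = (2 + w) * a - (2 + w) * (t + b) - 2 * a + 2 * t + 2 * b by ring.
  set U := (2 + w) * a in ch *; set V := (2 + w) * (t + b) in ch *.
  move: l1 l2 ch; rewrite !mulr2n; lra.
have key2 : a - t - b <= th / 2 * l.
  have -> : a - t - b = th / 2 * (w * (a - t - b)) by rewrite /w; field; rewrite gt_eqF.
  by rewrite ler_wpM2l // divr_ge0 // ltW.
have Ppos : 0 < P by rewrite powR_gt0 // (lt_le_trans ltr01 kge1).
rewrite -ler_ln ?posrE ?mulr_gt0 //.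
rewrite !lnM ?posrE ?mulr_gt0 // /P ln_powR -/l -/a -/b -/t.
lra.
Qed.

End CY.

End CYall.

Section NetAll.
Local Open Scope classical_set_scope.
Local Open Scope ring_scope.


Lemma char_poly_tr (R : comNzRingType) n (A : 'M[R]_n) : char_poly A^T = char_poly A.
Proof.
rewrite /char_poly -det_tr; congr (\det _); apply/matrixP => i j.
by rewrite !mxE eq_sym.
Qed.

Section Net.
Variables (R : realType) (V : countType) (c : V -> V -> R).
Hypothesis net : is_network c.

Lemma c_ge0 x y : 0 <= c x y. Proof. by case: net. Qed.
Lemma c_sym x y : c x y = c y x. Proof. by case: net. Qed.
Lemma pi_gt0 x : 0 < pi_w c x. Proof. by case: net. Qed.

Lemma transP_pi x y : pi_w c x * transP c x y = c x y.
Proof. by rewrite /transP mulrC divfK // gt_eqF // pi_gt0. Qed.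

Lemma transP_ge0 x y : 0 <= transP c x y.
Proof. by rewrite /transP divr_ge0 ?c_ge0 // ltW // pi_gt0. Qed.

Lemma psum_le_pi x (S : seq V) : uniq S -> \sum_(y <- S) c x y <= pi_w c x.
Proof.
move=> uS.
have fin : (\esum_(y in [set: V]) (c x y)%:E)%E \is a fin_num.
  case: net => _ _ lt _; rewrite ge0_fin_numE ?lt //.
  by apply: esum_ge0 => y _; rewrite lee_fin c_ge0.
rewrite -lee_fin /pi_w fineK // -(@sumEFin R _ S xpredT) (fsbig_seq _ _ uS).
apply: esum_ge; exists [set` S] => //; split => //.
exact: finite_seq.
Qed.


Lemma rq_numE (S : seq V) (f : V -> R) : rq_num c S f =
  \sum_(x <- S) pi_w c x * f x ^+ 2 - \sum_(x <- S) \sum_(y <- S) c x y * f x * f y.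
Proof.
rewrite /rq_num -sumrB; apply: eq_bigr => x _.
rewrite mulrBr mulr_sumr.
have -> : pi_w c x * f x * f x = pi_w c x * f x ^+ 2 by rewrite expr2 mulrA.
congr (_ - _); apply: eq_bigr => y _.
by rewrite -(transP_pi x y); ring.
Qed.

Lemma rq_num_ge0 (S : seq V) (f : V -> R) : uniq S -> 0 <= rq_num c S f.
Proof.
move=> uS; rewrite rq_numE subr_ge0.
set T := \sum_(x <- S) \sum_(y <- S) c x y * f x * f y.
set A := \sum_(x <- S) \sum_(y <- S) c x y * f x ^+ 2.
have h1 : T *+ 2 <= A + \sum_(x <- S) \sum_(y <- S) c x y * f y ^+ 2.
  rewrite -big_split /= -sumrMnl; apply: ler_sum => x _.
  rewrite -big_split /= -sumrMnl; apply: ler_sum => y _.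
  have h := mulr_ge0 (c_ge0 x y) (sqr_ge0 (f x - f y)).
  rewrite -subr_ge0; apply: (le_trans h); rewrite le_eqVlt; apply/orP; left; apply/eqP.
  rewrite mulr2n; ring.
have h2 : \sum_(x <- S) \sum_(y <- S) c x y * f y ^+ 2 = A.
  rewrite exchange_big /A; apply: eq_bigr => x _; apply: eq_bigr => y _.
  by rewrite c_sym.
have h3 : A <= \sum_(x <- S) pi_w c x * f x ^+ 2.
  apply: ler_sum => x _; rewrite -mulr_suml mulrC [X in _ <= X]mulrC.
  by apply: ler_wpM2l; [exact: sqr_ge0 | exact: psum_le_pi].
rewrite h2 in h1.
move: h1 h3; rewrite !mulr2n; lra.
Qed.


Definition rqset := [set r | exists (S : seq V) (f : V -> R),
         [/\ uniq S, 0 < rq_den c S f & r = rq_num c S f / rq_den c S f]].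

Lemma lambda_minE : lambda_min c = inf rqset.
Proof. by []. Qed.

Lemma root_in_set (Om : seq V) (l : R) : uniq Om ->
  root (char_poly (dir_mx c Om)) l -> rqset l.
Proof.
move=> uOm; rewrite -char_poly_tr -eigenvalue_root_char => /eigenvalueP [v vE vn0].
set n := size Om; set xs := tnth (in_tuple Om).
have xs_inj : injective xs by apply/tuple_uniqP.
pose f x := \sum_(j < n | xs j == x) v 0 j.
have fE j : f (xs j) = v 0 j.
  rewrite /f (big_pred1 j) // => i /=; apply/eqP/eqP => [/xs_inj //| -> //].
have eig j : v 0 j - \sum_(i < n) transP c (xs j) (xs i) * v 0 i = l * v 0 j.
  have h := congr1 (fun M : 'M[R]_(1, n) => M 0 j) vE; rewrite /= !mxE in h; rewrite -h.
  have -> : v 0 j = \sum_(i < n) v 0 i * (i == j)%:R.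
    rewrite (bigD1 j) //= eqxx mulr1 big1 ?addr0 // => i /negPf ->; by rewrite mulr0.
  rewrite -sumrB; apply: eq_bigr => i _; rewrite !mxE eq_sym; ring.
have dpos : 0 < rq_den c Om f.
  have [j vj] : exists j, v 0 j != 0.
    apply/existsP; move: vn0; apply: contraR; rewrite negb_exists => /forallP H.
    by apply/eqP/rowP => j; rewrite mxE; apply/eqP; move: (H j); rewrite negbK.
  rewrite /rq_den (big_tnth _ _ Om) (bigD1 j) //= -/xs.
  apply: ltr_pwDl.
    by rewrite mulr_gt0 ?pi_gt0 // fE exprn_even_gt0 //= vj.
  by apply: sumr_ge0 => i _; rewrite mulr_ge0 ?sqr_ge0 // ltW // pi_gt0.
have num_eq : rq_num c Om f = l * rq_den c Om f.
  rewrite /rq_num /rq_den (big_tnth _ _ Om) (big_tnth _ _ Om) -/xs mulr_sumr.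
  apply: eq_bigr => j _.
  have -> : \sum_(y <- Om) transP c (xs j) y * f y =
      \sum_(i < n) transP c (xs j) (xs i) * v 0 i.
    by rewrite (big_tnth _ _ Om) -/xs; apply: eq_bigr => i _; rewrite fE.
  rewrite fE eig; ring.
exists Om, f; split => //.
by rewrite num_eq mulfK // gt_eqF.
Qed.

Lemma rqset_lbound : has_lbound rqset.
Proof.
exists 0 => r [S [f [uS dp ->]]].
by rewrite divr_ge0 ?rq_num_ge0 // ltW.
Qed.

Lemma lmin_le_root (Om : seq V) (l : R) : uniq Om ->
  root (char_poly (dir_mx c Om)) l -> lambda_min c <= l.
Proof.
move=> uOm rl; rewrite lambda_minE.
exact: (ge_inf rqset_lbound (@root_in_set Om l uOm rl)).
Qed.


Lemma char2 x y : char_poly (dir_mx c [:: x; y]) =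
  ('X - (1 - transP c x x)%:P) * ('X - (1 - transP c y y)%:P)
   - (transP c x y)%:P * (transP c y x)%:P.
Proof.
rewrite /char_poly (expand_det_row _ ord0) !big_ord_recl big_ord0 /cofactor.
rewrite !det_mx11 !mxE /=.
have t0 : tnth (in_tuple [:: x; y]) ord0 = x by [].
have t1 : tnth (in_tuple [:: x; y]) (lift ord0 (0 : 'I_1)) = y by [].
have t2 : tnth (in_tuple [:: x; y]) (lift ord0 ord0) = y by [].
have t3 : tnth (in_tuple [:: x; y]) (lift (lift ord0 ord0) (0 : 'I_1)) = x by [].
rewrite ?t0 ?t1 ?t2 ?t3 /bump /= !add0n addn0 expr0 expr1 mulr1n mulr0n !sub0r !polyCN.
ring.
Qed.


Lemma pair_fact (C : R) x y : C < 0 -> yang_type c C -> x != y ->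
  c x y = 0 /\ transP c x x = transP c y y.
Proof.
move=> C0 Y xy.
have txx0 := transP_ge0 x x; have tyy0 := transP_ge0 y y.
have b0 := transP_ge0 x y; have e0 := transP_ge0 y x.
set txx := transP c x x in txx0 *; set tyy := transP c y y in tyy0 *.
set b := transP c x y in b0 *; set e := transP c y x in e0 *.
set a := 1 - txx; set d := 1 - tyy.
set D := (a - d) ^+ 2 + 4 * (b * e).
have D0 : 0 <= D by rewrite addr_ge0 ?sqr_ge0 // mulr_ge0 // mulr_ge0.
set s := Num.sqrt D.
have s0 : 0 <= s := sqrtr_ge0 D.
have ss : s ^+ 2 = D := sqr_sqrtr D0.
set r1 := (a + d - s) / 2; set r2 := (a + d + s) / 2.
have cp : char_poly (dir_mx c [:: x; y]) = \prod_(l <- [:: r1; r2]) ('X - l%:P).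
  rewrite char2 big_cons big_cons big_nil mulr1 -/txx -/tyy -/b -/e -/a -/d.
  have hs : r1 + r2 = a + d by rewrite /r1 /r2; field.
  have hp : r1 * r2 = a * d - b * e.
    have -> : r1 * r2 = ((a + d) ^+ 2 - s ^+ 2) / 4 by rewrite /r1 /r2; field.
    by rewrite ss /D; field.
  have -> : ('X - r1%:P) * ('X - r2%:P) = 'X * 'X - (r1 + r2)%:P * 'X + (r1 * r2)%:P.
    by rewrite (polyCD r1 r2) (polyCM r1 r2); ring.
  by rewrite hs hp (polyCD a d) (polyCB (a * d) (b * e)) (polyCM a d) (polyCM b e); ring.
have r12 : r1 <= r2 by rewrite /r1 /r2; lra.
have eigs : dirichlet_eigs c [:: x; y] [:: r1; r2] by split => //=; rewrite r12.
have uxy : uniq [:: x; y] by rewrite /= inE xy.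
have r1min : lambda_min c <= r1.
  by apply: (@lmin_le_root [:: x; y] r1 uxy); rewrite cp root_prod_XsubC inE eqxx.
have := Y _ _ uxy eigs 1%N isT; rewrite !big_ord1 /= => Yi.
have h1 : C * ((r2 - r1) * (r1 - lambda_min c)) <= 0.
  by apply: mulr_le0_ge0; [exact: ltW | apply: mulr_ge0; rewrite subr_ge0].
have e21 : r2 - r1 = s by rewrite /r1 /r2; field.
have e1r : 1 - r1 = (txx + tyy + s) / 2 by rewrite /r1 /a /d; field.
have h2 : s ^+ 2 * (s / 2) <= 0.
  apply: le_trans (le_trans Yi h1); rewrite e21 e1r.
  by apply: ler_wpM2l; [exact: sqr_ge0 | lra].
have sz : s = 0.
  have H0 : s ^+ 2 * (s / 2) == 0 by rewrite eq_le h2 mulr_ge0 ?sqr_ge0 ?divr_ge0.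
  move: H0; rewrite mulf_eq0 sqrf_eq0 mulf_eq0 orbA orbb => /orP[/eqP //|].
  by rewrite invr_eq0 pnatr_eq0.
have D00 : D = 0 by rewrite -ss sz expr0n.
have q1 : 0 <= (a - d) ^+ 2 := sqr_ge0 _.
have q2 : 0 <= b * e := mulr_ge0 b0 e0.
move: D00; rewrite /D; set u := (a - d) ^+ 2 in q1 *; set w := b * e in q2 * => D00.
have u0 : u = 0 by lra.
have w0 : w = 0 by lra.
split.
  move: w0; rewrite /w /b /e /transP => /eqP; rewrite mulf_eq0 => /orP[] /eqP.
    by move/eqP; rewrite mulf_eq0 invr_eq0 (gt_eqF (pi_gt0 x)) orbF => /eqP.
  by move/eqP; rewrite mulf_eq0 invr_eq0 (gt_eqF (pi_gt0 y)) orbF c_sym => /eqP.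
move: u0; rewrite /u => /eqP; rewrite sqrf_eq0 /a /d => /eqP; lra.
Qed.


Lemma size_lam (Om : seq V) (lam : seq R) : dirichlet_eigs c Om lam -> size lam = size Om.
Proof.
case=> _ E; have := size_char_poly (dir_mx c Om).
by rewrite E size_prod_XsubC => -[].
Qed.

Lemma lam_root (Om : seq V) (lam : seq R) i : dirichlet_eigs c Om lam ->
  (i < size Om)%N -> root (char_poly (dir_mx c Om)) lam`_i.
Proof.
move=> eg iO; have sl := size_lam Om lam eg; case: eg => _ E.
by rewrite E root_prod_XsubC mem_nth // sl.
Qed.

Lemma neg_case (C : R) (Om : seq V) (lam : seq R) k : C < 0 -> yang_type c C ->
  uniq Om -> dirichlet_eigs c Om lam -> (k < size Om)%N ->
  lam`_k = lambda_min c /\ lam`_0 = lambda_min c.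
Proof.
move=> C0 Y uOm eg kO.
have O0 : (0 < size Om)%N by apply: leq_ltn_trans kO.
case E: Om => [|x0 Om']; first by rewrite E in kO.
set d := 1 - transP c x0 x0.
have Pxx x : transP c x x = 1 - d.
  have -> : 1 - d = transP c x0 x0 by rewrite /d; ring.
  have [e|xx0] := eqVneq x x0; first by rewrite e.
  by have [] := pair_fact C _ _ C0 Y xx0.
have all_eq r : rqset r -> r = d.
  move=> [S [f [uS dp ->]]].
  have -> : rq_num c S f = d * rq_den c S f.
    rewrite /rq_num /rq_den mulr_sumr big_seq [RHS]big_seq; apply: eq_bigr => x xS.
    rewrite (bigD1_seq x) //= big1_seq ?addr0; last first.
      move=> y /andP[yx _]; rewrite /transP.
      have xy : x != y by rewrite eq_sym.
      by have [-> _] := pair_fact C _ _ C0 Y xy; rewrite mul0r mul0r.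
    rewrite Pxx; ring.
  by rewrite mulfK // gt_eqF.
have rk := root_in_set Om _ uOm (lam_root Om lam k eg kO).
have r0 := root_in_set Om _ uOm (lam_root Om lam 0 eg O0).
have lk := all_eq _ rk; have l0 := all_eq _ r0.
have lb : lambda_min c <= d by rewrite -l0; exact: lmin_le_root uOm (lam_root Om lam 0 eg O0).
have ub : d <= lambda_min c.
  rewrite lambda_minE; apply: lb_le_inf; first by exists lam`_0.
  by move=> r /all_eq ->.
have e : lambda_min c = d by apply/le_anti; rewrite lb ub.
by rewrite lk l0 e.
Qed.

End Net.

End NetAll.

Lemma sum_first (R : realType) n (F : nat -> R) :
  (forall i, 0 <= F i) -> F 0%N <= \sum_(i < n.+1) F i.
Proof.
move=> F0; rewrite big_ord_recl lerDl; apply: sumr_ge0 => i _; exact: F0.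
Qed.

Lemma cy_all (R : realType) (mu : nat -> R) (th : R) (k : nat) :
  0 <= th -> 0 <= mu 0%N -> (forall i j, (i <= j <= k)%N -> mu i <= mu j) ->
  (forall m, (1 <= m <= k)%N ->
     \sum_(i < m) (mu m - mu i) ^+ 2 <= th * \sum_(i < m) (mu m - mu i) * mu i) ->
  (1 <= k)%N -> mu k <= (1 + th) * ((k%:R : R) `^ (th / 2)) * mu 0%N.
Proof.
move=> th0 mu0 mono H k1.
have HG m : (1 <= m <= k)%N -> Gf R mu th m (mu m) <= 0.
  by move=> mk; rewrite /Gf sumrB -mulr_sumr subr_le0; exact: H.
have [thp|thn] := ltP 0 th; last first.
  have thz : th = 0 by apply/le_anti; rewrite thn th0.
  have := H k; rewrite k1 leqnn thz mul0r => /(_ isT) Hk.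
  rewrite mul0r powRr0 addr0 !mul1r.
  case: k k1 mono H HG Hk => [//|n] _ mono _ _ Hk.
  have := le_trans (sum_first R n (fun i => (mu n.+1 - mu i) ^+ 2) (fun i => sqr_ge0 _)) Hk.
  move=> h; have : (mu n.+1 - mu 0%N) ^+ 2 == 0 by rewrite eq_le h sqr_ge0.
  by rewrite sqrf_eq0 subr_eq0 => /eqP ->.
have [mup|mun] := ltP 0 (mu 0%N).
  exact: (@cy_main R mu th k mono HG (2 + 2 / th) thp erefl mup k1).
have mz : mu 0%N = 0 by apply/le_anti; rewrite mun mu0.
have Z : forall n m, (m <= n)%N -> (m <= k)%N -> mu m = 0.
  elim=> [|n IH] m mn mk; first by move: mn; rewrite leqn0 => /eqP ->.
  have [mn'|] := leqP m n; first exact: IH.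
  move=> nm; have em : m = n.+1 by apply/eqP; rewrite eqn_leq mn nm.
  have m1 : (1 <= m <= k)%N by rewrite em /= -em.
  have := H m m1.
  have -> : \sum_(i < m) (mu m - mu i) * mu i = 0.
    apply: big1 => i _; have im : (i < m)%N := ltn_ord i.
    have iN : (i <= n)%N by rewrite -ltnS -em.
    by rewrite (IH i iN (leq_trans (ltnW im) mk)) mulr0.
  rewrite mulr0 => Hm.
  move: (m1) => /andP[]; rewrite em => _ _.
  rewrite em in Hm.
  have := le_trans (sum_first R n (fun i => (mu n.+1 - mu i) ^+ 2) (fun i => sqr_ge0 _)) Hm.
  move=> h; have : (mu n.+1 - mu 0%N) ^+ 2 == 0 by rewrite eq_le h sqr_ge0.
  by rewrite mz subr0 sqrf_eq0 => /eqP.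
by rewrite mz mulr0 (Z k k).
Qed.

Theorem corollary5p6 (R : realType) (V : countType) (c : V -> V -> R) (C : R)
  (Om : seq V) (lam : seq R) (k : nat) (delta : R) :
  is_network c -> yang_type c C ->
  uniq Om -> dirichlet_eigs c Om lam ->
  (1 <= k)%N -> (k < size Om)%N ->
  0 < delta -> lam`_k.-1 <= 1 - delta ->
  lam`_k - lambda_min c
    <= (1 + C / delta) * ((k%:R : R) `^ ((C / delta) / 2)) * (lam`_0 - lambda_min c).
Proof.
move=> net Y uOm eg k1 kO d0 hk.
have [Cn|Cp] := ltP C 0.
  have [-> ->] := @neg_case R V c net C Om lam k Cn Y uOm eg kO.
  by rewrite subrr mulr0.
have sl := @size_lam R V c Om lam eg.
have O0 : (0 < size Om)%N by apply: leq_ltn_trans kO.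
have l0 := @lmin_le_root R V c net Om _ uOm (@lam_root R V c Om lam 0 eg O0).
have srt := eg.1.
have mono i j : (i <= j <= k)%N -> lam`_i <= lam`_j.
  move=> /andP[ij jk].
  have hj : (j < size lam)%N by rewrite sl (leq_ltn_trans jk kO).
  have hi : (i < size lam)%N by apply: leq_ltn_trans ij hj.
  have := sorted_leq_nth (@le_trans _ R) (@lexx _ R) 0 srt. by move=> /(_ i j hi hj ij).
pose mu i := lam`_i - lambda_min c.
have := @cy_all R mu (C / delta) k _ _ _ _ k1; apply.
- by rewrite divr_ge0 // ltW.
- by rewrite /mu subr_ge0.
- by move=> i j ijk; rewrite /mu lerD2r; exact: mono.
move=> m /andP[m1 mk].
have := Y Om lam uOm eg m (leq_ltn_trans mk kO).
set X := \sum_(i < m) (lam`_m - lam`_i) ^+ 2 * (1 - lam`_i).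
set Yv := \sum_(i < m) (lam`_m - lam`_i) * (lam`_i - lambda_min c).
move=> hY.
have eX : \sum_(i < m) (mu m - mu i) ^+ 2 = \sum_(i < m) (lam`_m - lam`_i) ^+ 2.
  by apply: eq_bigr => i _; rewrite /mu; congr (_ ^+ 2); ring.
have eY : \sum_(i < m) (mu m - mu i) * mu i = Yv.
  by apply: eq_bigr => i _; rewrite /mu; ring.
rewrite eX eY.
have dX : delta * \sum_(i < m) (lam`_m - lam`_i) ^+ 2 <= X.
  rewrite mulr_sumr; apply: ler_sum => i _.
  rewrite mulrC; apply: ler_wpM2l; first exact: sqr_ge0.
  have : lam`_i <= lam`_k.-1.
    apply: mono; rewrite -ltnS prednK // (leq_trans (ltn_ord i)) //=.
    by rewrite (leq_trans (leq_pred k)).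
  move=> h; lra.
rewrite -(ler_pM2l d0) mulrA [delta * (C / delta)]mulrC divfK ?gt_eqF //.
exact: le_trans dX hY.
Qed.
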